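(* Let $n$ be odd and suppose $q=18n^2+1$ is a prime power. Let $x$ be a primitive $(3n)$-th root of unity in $\mathbb F_q$, and let $Y=(y_0,y_1,\dots,y_{3n-1})$ be a complete system of representatives for the cosets of $C^{3n}$ in $\mathbb F_q^*$ such that $\sum_{i=0}^{3n-1}y_i=0$, $\sum_{i=0}^{3n-1}x^iy_i=0$ and $\sum_{i=0}^{3n-1}x^{-i}y_i=0$. Then there exists a $(9n^2,3n;4)$ Heffter net.
   Context: $C^{3n}$ denotes the subgroup of index $3n$ of $\mathbb F_q^*$ (the nonzero $3n$-th powers). A half-set of an abelian group $G$ of odd order $2v+1\ge7$ is a subset $V\subseteq G\setminus\{0\}$ containing exactly one element of each pair $\{g,-g\}$, $g\ne0$. A $(v,k)$ Heffter system on $V$ is a partition of $V$ into blocks of size $k$ each summing to $0$ in $G$. A $(k^2,k;r)$ Heffter net is a partial linear space (any two distinct points lie in at most one block) whose point set is a half-set $V$ of an abelian group of order $2k^2+1$, with a resolution of its blocks into $r$ parallel classes (each a partition of $V$), each of which is a $(k^2,k)$ Heffter system. *)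

(* Defs.v *)
From HB Require Import structures.
From mathcomp Require Import all_boot all_order all_algebra.
Set Implicit Arguments. Unset Strict Implicit. Unset Printing Implicit Defensive.
Import GRing.Theory.
Local Open Scope ring_scope.

Definition in_Cpow (F : finFieldType) (m : nat) (a : F) : bool :=
  [exists z : F, (z != 0) && (a == z ^+ m)].

Definition coset_reps (F : finFieldType) (m : nat) (y : 'I_m -> F) : Prop :=
  (forall i, y i != 0) /\
  (forall a : F, a != 0 -> exists! i : 'I_m, in_Cpow m (a / y i)).

Definition half_set (G : finZmodType) (V : {set G}) : Prop :=
  0 \notin V /\ forall g : G, g != 0 -> (g \in V) = (- g \notin V).

Definition heffter_system (G : finZmodType) (V : {set G}) (k : nat)
  (P : {set {set G}}) : Prop :=
  partition P V /\
  forall B, B \in P -> #|B| = k /\ \sum_(g in B) g = 0.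

(* A (k^2,k;r) Heffter net on G: a half-set V of G (|G| = 2k^2+1) and r
   parallel classes P_0..P_{r-1} (a resolution of the block multiset), each a
   (k^2,k) Heffter system on V, such that the blocks form a partial linear
   space: two distinct blocks (distinct as members of the resolution) share
   at most one point. *)
Definition heffter_net (G : finZmodType) (k r : nat) : Prop :=
  #|G| = (2 * k ^ 2).+1 /\
  exists (V : {set G}) (P : 'I_r -> {set {set G}}),
    half_set V /\
    (forall i, heffter_system V k (P i)) /\
    (forall (i j : 'I_r) (B B' : {set G}), B \in P i -> B' \in P j ->
        (i != j) || (B != B') -> #|B :&: B'| <= 1)%N.

(* Main.v *)
Require Import Defs.
From mathcomp Require Import all_boot all_order all_algebra.
From mathcomp Require Import all_fingroup all_solvable all_field.
From mathcomp Require Import zify.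
Local Open Scope ring_scope.
Import GRing.Theory.

Lemma modL1 (m a b c : nat) : (a < m)%N -> (b < m)%N ->
  ((a + c) %% m = (b + c) %% m)%N -> a = b.
Proof.
move=> am bm /eqP; rewrite eqn_modDr => /eqP.
by rewrite !modn_small.
Qed.

Lemma modL2 (m a b : nat) : odd m -> (a < m)%N -> (b < m)%N ->
  ((2 * a) %% m = (2 * b) %% m)%N -> a = b.
Proof.
move=> om.
wlog ab : a b / (a <= b)%N.
  move=> H am bm e; case: (leqP a b) => h; first exact: H.
  by symmetry; apply: H => //; apply: ltnW.
move=> am bm /eqP; rewrite eq_sym eqn_mod_dvd; last by rewrite leq_mul2l ab orbT.
rewrite -mulnBr Gauss_dvdr; last by rewrite coprimen2.
case: (posnP (b - a)) => [h _|h d]; first by lia.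
have := dvdn_leq h d; lia.
Qed.

Lemma unit_pow (F : finFieldType) (z : F) : z != 0 -> z ^+ (#|F|.-1) = 1.
Proof.
move=> nz; have := expf_card z.
rewrite -(ltn_predK (finNzRing_gt1 F)) exprS => h.
by apply: (mulfI nz); rewrite mulr1.
Qed.

Lemma has_gen (F : finFieldType) : exists g : F, (#|F|.-1).-primitive_root g.
Proof.
have : has (#|F|.-1).-primitive_root (enum (predC1 (0 : F))).
  apply: has_prim_root.
  - by have := finNzRing_gt1 F; case: #|F| => [|[|k]].
  - apply/allP => z; rewrite mem_enum inE => nz.
    by rewrite unity_rootE unit_pow.
  - exact: enum_uniq.
  - by rewrite -cardE cardC1.
by case/hasP => g _ pg; exists g.
Qed.

Theorem theorem5p1 (n : nat) (F : finFieldType) (x : F)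
  (y : 'I_(3 * n) -> F) :
  odd n ->
  #|F| = (18 * n ^ 2).+1 ->
  (3 * n)%N.-primitive_root x ->
  coset_reps y ->
  \sum_(i < 3 * n) y i = 0 ->
  \sum_(i < 3 * n) x ^+ i * y i = 0 ->
  \sum_(i < 3 * n) x ^- i * y i = 0 ->
  exists G : finZmodType, heffter_net G (3 * n) 4.
Proof.
move=> oddn cardF prim [ynz yuniq] s0 s1 s2.
set m := (3 * n)%N in prim y ynz yuniq s0 s1 s2 *.
have m_odd : odd m by rewrite /m oddM oddn.
have n_gt0 : (0 < n)%N by move: oddn; rewrite lt0n; apply: contraL => /eqP ->.
have m_gt0 : (0 < m)%N by rewrite /m; lia.
have m_gt1 : (1 < m)%N by rewrite /m; lia.
have Nq : #|F|.-1 = (2 * (m * m))%N by rewrite cardF /m; lia.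
have xm : x ^+ m = 1 := prim_expr_order prim.
have xnz : x != 0.
  by apply/eqP => x0; move: xm; rewrite x0 expr0n gtn_eqF // => /eqP; rewrite eq_sym oner_eq0.
have [g gprim] := has_gen F.
rewrite Nq in gprim.
have gnz : g != 0.
  apply/eqP => g0; have := prim_expr_order gprim; rewrite g0 expr0n gtn_eqF.
    by move=> /eqP; rewrite eq_sym oner_eq0.
  by lia.
pose C (b : F) := exists z : F, z != 0 /\ b = z ^+ m.
have CP b : reflect (C b) (in_Cpow m b).
  apply: (iffP existsP) => [[z /andP [nz /eqP e]]|[z [nz e]]]; exists z => //.
  by rewrite nz e eqxx.
have CM a b : C a -> C b -> C (a * b).
  move=> [z1 [n1 ->]] [z2 [n2 ->]]; exists (z1 * z2); split; last by rewrite exprMn.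
  by rewrite mulf_neq0.
have gmm : g ^+ (m * m) = -1.
  have w2 : (g ^+ (m * m)) ^+ 2 = 1.
    by rewrite -exprM mulnC prim_expr_order.
  have wn1 : g ^+ (m * m) != 1.
    rewrite -(prim_order_dvd gprim); apply/negP => /dvdn_leq.
    have : (0 < m * m)%N by rewrite muln_gt0 m_gt0.
    move=> h /(_ h); lia.
  move/eqP: w2; rewrite -subr_eq0 subr_sqr_1 mulf_eq0 subr_eq0 (negbTE wn1) /=.
  by rewrite addr_eq0 => /eqP.
have m1n1 : (-1 : F) != 1.
  rewrite -gmm -(prim_order_dvd gprim); apply/negP => /dvdn_leq.
  have h : (0 < m * m)%N by lia.
  move/(_ h); lia.
have Cm1 : C (-1).
  exists (g ^+ m); split; first by rewrite expf_neq0.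
  by rewrite -exprM.
have Cx : C x.
  have xN : x ^+ (2 * (m * m)) = 1 by rewrite mulnA mulnC exprM xm expr1n.
  have [k xk] := prim_rootP gprim xN.
  have : (2 * m %| k)%N.
    rewrite -(dvdn_pmul2r m_gt0) -mulnA (prim_order_dvd gprim) exprM -xk.
    by rewrite xm.
  move/divnK => ek.
  exists (g ^+ (2 * (k %/ (2 * m)))); split; first by rewrite expf_neq0.
  by rewrite -exprM xk; congr (g ^+ _); rewrite -{1}ek; lia.
have Cxj j : C (x ^+ j).
  case: Cx => z [nz ->]; exists (z ^+ j); split; first by rewrite expf_neq0.
  by rewrite exprAC.
have uniqC a i i' : a != 0 -> C (a / y i) -> C (a / y i') -> i = i'.
  move=> anz /CP h /CP h'; have [i0 [_ U]] := yuniq a anz.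
  by rewrite -(U _ h) -(U _ h').
pose p (ij : 'I_m * 'I_m) : F := y ij.1 * x ^+ ij.2.
have pnz ij : p ij != 0 by rewrite mulf_neq0 ?expf_neq0.
have p_inj : injective p.
  move=> [i j] [i' j'] /= e.
  have ii : i = i'.
    apply: (uniqC (p (i', j'))) => //.
      by rewrite -e /p /= mulrAC divff // mul1r.
    by rewrite /p /= mulrAC divff // mul1r.
  subst i'; congr pair.
  move: e; rewrite /p /= => /(mulfI (ynz i)) /eqP.
  rewrite (eq_prim_root_expr prim) => /eqP.
  by rewrite !modn_small // => /val_inj.
pose V : {set F} := p @: [set: 'I_m * 'I_m].
have notboth g0 : g0 \in V -> - g0 \in V -> False.
  move=> /imsetP [[i j] _ ->] /imsetP [[i' j'] _ e].
  have ii : i = i'.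
    apply: (uniqC (p (i', j'))) => //.
      rewrite -e /p /= mulNr mulrAC divff // mul1r -mulN1r; exact: CM.
    by rewrite /p /= mulrAC divff // mul1r.
  subst i'; move: e; rewrite /p /= -mulrN => /(mulfI (ynz i)) e.
  have := congr1 (fun u => u ^+ m) e.
  rewrite /= exprNn -signr_odd m_odd expr1 exprAC [(x ^+ j') ^+ m]exprAC xm !expr1n mulr1.
  by move=> h; move: m1n1; rewrite h eqxx.
have covV g0 : g0 != 0 -> g0 \in V \/ - g0 \in V.
  move=> nz; have [i0 [/CP [z [znz e]] _]] := yuniq g0 nz.
  have w2 : ((z ^+ m) ^+ m) ^+ 2 = 1.
    rewrite (_ : ((z ^+ m) ^+ m) ^+ 2 = z ^+ (#|F|.-1)); first exact: unit_pow.
    by rewrite Nq -!exprM; congr (z ^+ _); lia.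
  have g0e : g0 = y i0 * z ^+ m by rewrite -e mulrC divfK.
  move/eqP: w2; rewrite -subr_eq0 subr_sqr_1 mulf_eq0 subr_eq0 addr_eq0.
  case/orP => /eqP h.
    have [j xj] := prim_rootP prim h.
    by left; apply/imsetP; exists (i0, j) => //; rewrite /p /= -xj.
  have h' : (- z ^+ m) ^+ m = 1.
    by rewrite exprNn -signr_odd m_odd expr1 h mulN1r opprK.
  have [j xj] := prim_rootP prim h'.
  by right; apply/imsetP; exists (i0, j) => //; rewrite /p /= -xj g0e mulrN.
have hsV : half_set V.
  split.
    by apply/imsetP => [[ij _ e]]; move: (pnz ij); rewrite -e eqxx.
  move=> g0 nz; case: (boolP (g0 \in V)) => h.
    have h' : - g0 \notin V by apply/negP => h'; exact: (notboth _ h h').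
    by rewrite h'.
  by case: (covV _ nz) => h'; [rewrite h' in h | rewrite h'].
pose md (k : nat) : 'I_m := Ordinal (ltn_pmod k m_gt0).
pose ab (t : 'I_4) (c e : 'I_m) : 'I_m * 'I_m :=
  match val t with 0 => (c, e) | 1 => (e, c) | 2 => (e, md (e + c)%N)
  | _ => (e, md (c + (m - e))%N) end.
pose memb (t : 'I_4) (c : 'I_m) (u : 'I_m * 'I_m) : bool :=
  match val t with 0 => u.1 == c | 1 => u.2 == c
  | 2 => val u.2 == ((u.1 + c) %% m)%N
  | _ => val c == ((u.1 + u.2) %% m)%N end.
pose blk (t : 'I_4) (c : 'I_m) : {set F} := (fun e => p (ab t c e)) @: [set: 'I_m].
pose P (t : 'I_4) : {set {set F}} := (blk t) @: [set: 'I_m].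
have K1 t c e : memb t c (ab t c e).
  rewrite /memb /ab; case: t => [[|[|[|[|?]]]] ?] //=.
  rewrite modnDmr (_ : (e + (c + (m - e)) = c + m)%N); last by have := ltn_ord e; lia.
  by rewrite modnDr modn_small.
have K2 t c u : memb t c u -> exists e, u = ab t c e.
  rewrite /memb /ab; case: u => i j; case: t => [[|[|[|[|?]]]] ?] //= h.
  - by exists j; rewrite (eqP h).
  - by exists i; rewrite (eqP h).
  - by exists i; congr pair; apply: val_inj; rewrite /= (eqP h).
  exists i; congr pair; apply: val_inj; rewrite /= (eqP h) modnDml.
  rewrite (_ : (i + j + (m - i) = j + m)%N); last by have := ltn_ord i; lia.
  by rewrite modnDr modn_small.
have K3 t c : injective (ab t c).
  rewrite /ab; case: t => [[|[|[|[|?]]]] ?] //= e e' h; by case: h.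
have K4 t c u : (p u \in blk t c) = memb t c u.
  apply/imsetP/idP => [[e _ /p_inj ->]|h]; first exact: K1.
  by have [e ->] := K2 _ _ _ h; exists e.
have K5 t c : #|blk t c| = m.
  rewrite card_imset ?cardsT ?card_ord //.
  by move=> e e' /p_inj /K3.
have K7 t c c' u : memb t c u -> memb t c' u -> c = c'.
  rewrite /memb; case: u => i j; case: t => [[|[|[|[|?]]]] ?] //=.
  - by move=> /eqP -> /eqP.
  - by move=> /eqP -> /eqP.
  - move=> /eqP -> /eqP h; apply: val_inj.
    apply: (modL1 m c c' i (ltn_ord c) (ltn_ord c')).
    by rewrite addnC h addnC.
  by move=> /eqP h1 /eqP h2; apply: val_inj; rewrite /= h1 h2.
have K9 t u : exists c, memb t c u.
  rewrite /memb; case: u => i j; case: t => [[|[|[|[|?]]]] ?] //=.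
  - by exists i.
  - by exists j.
  - exists (md (j + (m - i))%N); rewrite /= modnDmr.
    rewrite (_ : (i + (j + (m - i)) = j + m)%N); last by have := ltn_ord i; lia.
    by rewrite modnDr modn_small.
  by exists (md (i + j)%N).
have K8' t t' c c' u v : (val t < val t')%N -> memb t c u -> memb t' c' u ->
    memb t c v -> memb t' c' v -> u = v.
  rewrite /memb; case: u => i j; case: v => i' j'.
  case: t => [[|[|[|[|?]]]] ?] //=; case: t' => [[|[|[|[|?]]]] ?] //= _.
  - by move=> /eqP h1 /eqP h2 /eqP h3 /eqP h4; congr pair; apply: val_inj;
      rewrite /= ?h1 ?h2 ?h3 ?h4.
  - move=> /eqP h1 /eqP h2 /eqP h3 /eqP h4.
    by congr pair; apply: val_inj => /=; [rewrite h1 h3 | rewrite h2 h4 h1 h3].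
  - move=> /eqP h1 /eqP h2 /eqP h3 /eqP h4.
    have ii : val i = val i' by rewrite h1 h3.
    congr pair; apply: val_inj => //=.
    apply: (modL1 m j j' i (ltn_ord j) (ltn_ord j')).
    by rewrite [(j + i)%N]addnC -h2 h4 ii addnC.
  - move=> /eqP h1 /eqP h2 /eqP h3 /eqP h4.
    have jj : val j = val j' by rewrite h1 h3.
    congr pair; apply: val_inj => //=.
    apply: (modL1 m i i' c' (ltn_ord i) (ltn_ord i')).
    by rewrite -h2 -h4 jj.
  - move=> /eqP h1 /eqP h2 /eqP h3 /eqP h4.
    have jj : val j = val j' by rewrite h1 h3.
    congr pair; apply: val_inj => //=.
    apply: (modL1 m i i' j (ltn_ord i) (ltn_ord i')).
    by rewrite -h2 h4 jj.
  move=> /eqP h1 /eqP h2 /eqP h3 /eqP h4.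
  have e1 : ((2 * i + c) %% m = c')%N.
    by rewrite h2 h1 modnDmr; congr (_ %% m)%N; lia.
  have e2 : ((2 * i' + c) %% m = c')%N.
    by rewrite h4 h3 modnDmr; congr (_ %% m)%N; lia.
  have ii : val i = val i'.
    apply: (modL2 m i i' m_odd (ltn_ord i) (ltn_ord i')).
    by apply/eqP; rewrite -(eqn_modDr c); apply/eqP; rewrite e1 e2.
  by congr pair; apply: val_inj => //=; rewrite h1 h3 ii.
have K8 t t' c c' u v : t != t' -> memb t c u -> memb t' c' u ->
    memb t c v -> memb t' c' v -> u = v.
  move=> ntt h1 h2 h3 h4; case: (ltngtP (val t) (val t')) => h.
  - exact: (K8' t t' c c').
  - exact: (K8' t' t c' c).
  by move: ntt; rewrite (val_inj h) eqxx.
have sumx : \sum_(e < m) x ^+ e = 0.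
  have x1 : x - 1 != 0.
    by rewrite subr_eq0 -[x]expr1 -(prim_order_dvd prim) dvdn1 gtn_eqF.
  by apply: (mulfI x1); rewrite -subrX1 xm subrr mulr0.
have K6 t c : \sum_(u in blk t c) u = 0.
  rewrite big_imset /=; last by move=> e e' _ _ /p_inj /K3.
  rewrite (eq_bigl (fun _ => true)); last by move=> e; rewrite in_setT.
  rewrite /p /ab; case: t => [[|[|[|[|?]]]] ?] //=.
  - by rewrite -mulr_sumr sumx mulr0.
  - by rewrite -mulr_suml s0 mul0r.
  - rewrite (eq_bigr (fun e : 'I_m => x ^+ e * y e * x ^+ c)).
      by rewrite -mulr_suml s1 mul0r.
    by move=> e _; rewrite expr_mod // exprD mulrA [y e * _]mulrC.
  - rewrite (eq_bigr (fun e : 'I_m => x ^- e * y e * x ^+ c)).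
      by rewrite -mulr_suml s2 mul0r.
    move=> e _; rewrite expr_mod // exprD.
    have -> : x ^+ (m - e) = x ^- e.
      apply: (mulIf (expf_neq0 e xnz)); rewrite mulVf ?expf_neq0 //.
      by rewrite -exprD subnK ?xm //; exact: ltnW (ltn_ord e).
    by rewrite [x ^+ c * _]mulrC mulrA [y e * _]mulrC.
exists F; split; first by rewrite cardF /m; lia.
exists V, P; split; first exact: hsV.
split.
  move=> t; split.
    apply/and3P; split.
    - apply/eqP/setP => u; apply/bigcupP/idP.
        move=> [B /imsetP [c _ ->] /imsetP [e _ ->]].
        by apply/imsetP; exists (ab t c e).
      move=> /imsetP [w _ ->]; have [c hc] := K9 t w.
      by exists (blk t c); [apply/imsetP; exists c | rewrite K4].
    - apply/trivIsetP => A B /imsetP [c _ ->] /imsetP [c' _ ->] neq.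
      rewrite -setI_eq0; apply/eqP/setP => u; rewrite inE in_set0.
      apply/negP => /andP [/imsetP [e _ ue] h2].
      rewrite ue K4 in h2; have cc := K7 _ _ _ _ (K1 t c e) h2.
      by move: neq; rewrite cc eqxx.
    - apply/imsetP => [[c _ e]]; have := K5 t c; rewrite -e cards0; lia.
  move=> B /imsetP [c _ ->]; split; [exact: K5 | exact: K6].
move=> i j B B' /imsetP [c _ ->] /imsetP [c' _ ->] h.
apply/card_le1_eqP => u v; rewrite !inE.
move=> /andP [/imsetP [wu _ eu] hu2] /andP [/imsetP [wv _ ev] hv2].
rewrite eu K4 in hu2; rewrite ev K4 in hv2; rewrite eu ev.
case: (eqVneq i j) => [eij | nij].
  subst j; move: h; rewrite eqxx /= => h.
  by move: h; rewrite (K7 _ _ _ _ (K1 i c wu) hu2) eqxx.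
by congr p; apply: (K8 i j c c' _ _ nij) => //; exact: K1.
Qed.
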